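(* Let $X, Y$ be two infinite sets forming a partition of $\mathbb{N} = \{0,1,2,\ldots\}$, let $(x(n))_{n\geq 0}$ be the increasing enumeration of $X$ and $(y(n))_{n\geq0}$ the increasing enumeration of $Y$. Suppose that for all $n \geq 0$: $x(x(n)) = 2x(n)$, $y(y(n)) = 2y(n)$, and $|x(n) - y(n)| = 1$. Then either $x = a$ and $y = b$, or $x = b$ and $y = a$. In particular $(x(n)-y(n))_{n\geq 0}$ equals $(1-2t(n))_{n\geq0}$ or $(2t(n)-1)_{n\geq 0}$.
   Context: The Thue–Morse sequence $(t(n))_{n\geq 0}$ is defined by $t(0)=0$, $t(2n)=t(n)$, $t(2n+1)=1-t(n)$. A nonnegative integer is odious if the sum of its binary digits is odd and evil if it is even. $(a(n))_{n\geq0}$ is the increasing sequence of odious numbers and $(b(n))_{n\geq 0}$ the increasing sequence of evil numbers, both indexed from $0$. *)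

(* Defs.v *)
From mathcomp Require Import all_boot.
Set Implicit Arguments. Unset Strict Implicit. Unset Printing Implicit Defensive.

(* Thue-Morse: t 0 = 0, t (2n) = t n, t (2n+1) = 1 - t n. *)
Fixpoint tm_aux (fuel n : nat) : nat :=
  match fuel with
  | 0 => 0
  | fuel'.+1 => if n == 0 then 0
                else if odd n then 1 - tm_aux fuel' n./2 else tm_aux fuel' n./2
  end.
Definition t (n : nat) : nat := tm_aux n.+1 n.

Fixpoint digsum_aux (fuel n : nat) : nat :=
  match fuel with
  | 0 => 0
  | fuel'.+1 => if n == 0 then 0 else odd n + digsum_aux fuel' n./2
  end.
Definition bin_digit_sum (n : nat) : nat := digsum_aux n.+1 n.

Definition odious (n : nat) : bool := odd (bin_digit_sum n).
Definition evil (n : nat) : bool := ~~ odd (bin_digit_sum n).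

Definition increasing_enum (P : nat -> bool) (f : nat -> nat) : Prop :=
  (forall n, f n < f n.+1) /\ (forall m, P m <-> exists n, f n = m).

(* Main.v *)
Require Import Defs.
From mathcomp Require Import all_boot all_order all_algebra.
From mathcomp Require Import zify.
Import GRing.Theory Num.Theory.

Lemma tm_aux_fuel f g n : (n < f)%N -> (n < g)%N -> tm_aux f n = tm_aux g n.
Proof.
elim: f g n => [|f IH] [|g] n //= Hf Hg.
case: eqP => [//|Hn].
have Hh : (n./2 < n)%N by rewrite -divn2; lia.
rewrite (IH g) //; lia.
Qed.

Lemma ds_aux_fuel f g n : (n < f)%N -> (n < g)%N -> digsum_aux f n = digsum_aux g n.
Proof.
elim: f g n => [|f IH] [|g] n //= Hf Hg.
case: eqP => [//|Hn].
have Hh : (n./2 < n)%N by rewrite -divn2; lia.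
rewrite (IH g) //; lia.
Qed.

Lemma half2 k r : (r <= 1)%N -> (2 * k + r)./2 = k.
Proof. move=> Hr; rewrite -divn2; lia. Qed.

Lemma odd2 k r : (r <= 1)%N -> odd (2 * k + r) = (r == 1%N).
Proof.
move=> Hr; have := modn2 (2 * k + r).
case: (odd _); case: r Hr => [|[|]] //= _; lia.
Qed.

Lemma t_even k : t (2 * k) = t k.
Proof.
rewrite {1}/t /=. case: eqP => [E|E]; first by have -> : k = 0%N by lia.
have := odd2 k 0 isT; rewrite addn0 => -> /=.
have := half2 k 0 isT; rewrite addn0 => ->.
apply: tm_aux_fuel; lia.
Qed.

Lemma t_odd k : t (2 * k + 1) = (1 - t k)%N.
Proof.
rewrite {1}/t /=. case: eqP => [E|E]; first lia.
rewrite odd2 // half2 //=.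
congr (_ - _)%N; apply: tm_aux_fuel; lia.
Qed.

Lemma ds_even k : bin_digit_sum (2 * k) = bin_digit_sum k.
Proof.
rewrite {1}/bin_digit_sum /=. case: eqP => [E|E]; first by have -> : k = 0%N by lia.
have := odd2 k 0 isT; rewrite addn0 => -> /=.
have := half2 k 0 isT; rewrite addn0 => ->.
rewrite add0n; apply: ds_aux_fuel; lia.
Qed.

Lemma ds_odd k : bin_digit_sum (2 * k + 1) = (1 + bin_digit_sum k)%N.
Proof.
rewrite {1}/bin_digit_sum /=. case: eqP => [E|E]; first lia.
rewrite odd2 // half2 //=.
congr (_ + _)%N; apply: ds_aux_fuel; lia.
Qed.

Lemma decomp m : exists k r, m = (2 * k + r)%N /\ (r <= 1)%N.
Proof. exists (m %/ 2)%N, (m %% 2)%N; lia. Qed.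

Lemma t_le1 m : (t m <= 1)%N.
Proof.
elim/ltn_ind: m => m IH.
have [k [r [Em Hr]]] := decomp m; rewrite Em.
case: r Hr Em => [|[|//]] _ Em.
- rewrite addn0 t_even. case: (posnP k) => [->|kp]; first by [].
  apply: IH; lia.
- rewrite t_odd; lia.
Qed.

Lemma t_ds m : odd (bin_digit_sum m) = (t m == 1%N).
Proof.
elim/ltn_ind: m => m IH.
have [k [r [Em Hr]]] := decomp m; rewrite Em.
case: r Hr Em => [|[|//]] _ Em.
- rewrite addn0 t_even ds_even. case: (posnP k) => [->|kp]; first by [].
  apply: IH; lia.
- rewrite t_odd ds_odd /=. rewrite IH; last lia.
  have := t_le1 k. case: (t k) => [|[|]] //.
Qed.

Definition trec (g : nat -> nat) :=
  forall n, g (2 * n)%N = g n /\ g (2 * n + 1)%N = (1 - g n)%N.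

Lemma trec_uniq g1 g2 : trec g1 -> trec g2 -> g1 0%N = g2 0%N -> forall n, g1 n = g2 n.
Proof.
move=> H1 H2 H0 m. elim/ltn_ind: m => m IH.
have [k [r [Em Hr]]] := decomp m; rewrite Em.
case: r Hr Em => [|[|//]] _ Em.
- rewrite addn0 (H1 k).1 (H2 k).1. case: (posnP k) => [->|kp]; first by [].
  apply: IH; lia.
- rewrite (H1 k).2 (H2 k).2 IH //; lia.
Qed.

Lemma trec_t : trec t.
Proof. move=> n; split; [exact: t_even | exact: t_odd]. Qed.

Lemma trec_tc : trec (fun n => 1 - t n)%N.
Proof. move=> n; rewrite t_even t_odd; have := t_le1 n; split; lia. Qed.

Lemma enum_evil (x : nat -> nat) : (forall n, x n < x n.+1)%N ->
  (forall n, x n = 2 * n + t n)%N -> increasing_enum evil x.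
Proof.
move=> Hi Hx; split => // m; rewrite /evil t_ds; split.
- have [k [r [Em Hr]]] := decomp m; rewrite Em.
  case: r Hr Em => [|[|//]] _ Em.
  + rewrite addn0 t_even => /eqP Ht; exists k; rewrite Hx; have := t_le1 k; lia.
  + rewrite t_odd => /eqP Ht; exists k; rewrite Hx; have := t_le1 k; lia.
- move=> [n <-]; rewrite Hx; have := t_le1 n.
  case E: (t n) => [|[|//]] _.
  + by rewrite addn0 t_even E.
  + by rewrite t_odd E.
Qed.

Lemma enum_odious (x : nat -> nat) : (forall n, x n < x n.+1)%N ->
  (forall n, x n = 2 * n + (1 - t n))%N -> increasing_enum odious x.
Proof.
move=> Hi Hx; split => // m; rewrite /odious t_ds; split.
- have [k [r [Em Hr]]] := decomp m; rewrite Em.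
  case: r Hr Em => [|[|//]] _ Em.
  + rewrite addn0 t_even => /eqP Ht; exists k; rewrite Hx; lia.
  + rewrite t_odd => /eqP Ht; exists k; rewrite Hx; have := t_le1 k; lia.
- move=> [n <-]; rewrite Hx; have := t_le1 n.
  case E: (t n) => [|[|//]] _.
  + by rewrite t_odd E.
  + by rewrite addn0 t_even E.
Qed.

Local Open Scope ring_scope.

Theorem theorem4 (X : nat -> bool) (x y : nat -> nat) :
  (exists f : nat -> nat, forall n, (n < f n)%N /\ X (f n)) ->
  (exists f : nat -> nat, forall n, (n < f n)%N /\ ~~ X (f n)) ->
  increasing_enum X x ->
  increasing_enum (fun m => ~~ X m) y ->
  (forall n, x (x n) = (2 * x n)%N) ->
  (forall n, y (y n) = (2 * y n)%N) ->
  (forall n, `|(x n)%:Z - (y n)%:Z| = 1) ->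
  ((increasing_enum odious x /\ increasing_enum evil y) \/
   (increasing_enum evil x /\ increasing_enum odious y)) /\
  ((forall n, (x n)%:Z - (y n)%:Z = 1 - 2 * (t n)%:Z) \/
   (forall n, (x n)%:Z - (y n)%:Z = 2 * (t n)%:Z - 1)).
Proof.
move=> _ _ [Hxi HX] [Hyi HY] Hxx Hyy Habs.
have Hxl := homo_ltn ltn_trans Hxi.
have Hyl := homo_ltn ltn_trans Hyi.
have xin k : X (x k) by apply/HX; exists k.
have yin k : ~~ X (y k) by apply/HY; exists k.
have ab n : (x n = y n + 1)%N \/ (y n = x n + 1)%N by have := Habs n; lia.
have pair n : (x n = 2 * n /\ y n = 2 * n + 1)%N \/ (x n = 2 * n + 1 /\ y n = 2 * n)%N.
{ elim/ltn_ind: n => n IH.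
  have cover m : (m < 2 * n)%N -> exists k, (k < n)%N /\ (x k = m \/ y k = m).
  { move=> Hm; exists (m %/ 2)%N; have Hk : (m %/ 2 < n)%N by lia.
    split=> //; have := IH _ Hk; lia. }
  have xge : (2 * n <= x n)%N.
  { rewrite leqNgt; apply/negP => lt; have [k [kn [E|E]]] := cover _ lt.
    - have := Hxl _ _ kn; lia.
    - by have := yin k; rewrite E xin. }
  have yge : (2 * n <= y n)%N.
  { rewrite leqNgt; apply/negP => lt; have [k [kn [E|E]]] := cover _ lt.
    - by have := yin n; rewrite -E xin.
    - have := Hyl _ _ kn; lia. }
  have := ab n.
  case: (boolP (X (2 * n)%N)) => H.
  - have [j Hj] := (HX _).1 H.
    have jn : j = n.
    { case: (ltngtP j n) => // c.
      - have := IH j c; lia.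
      - have := Hxl _ _ c; lia. }
    subst j; lia.
  - have [j Hj] := (HY _).1 H.
    have jn : j = n.
    { case: (ltngtP j n) => // c.
      - have := IH j c; lia.
      - have := Hyl _ _ c; lia. }
    subst j; lia. }
pose e n := (x n - 2 * n)%N.
have eE n : (x n = 2 * n + e n /\ y n = 2 * n + 1 - e n /\ e n <= 1)%N.
{ rewrite /e; have := pair n; lia. }
have erec : trec e.
{ move=> n; rewrite /e.
  case: (pair n) => [[E1 E2]|[E1 E2]]; move: (Hxx n) (Hyy n); rewrite E1 E2 => A B;
  have := pair (2 * n)%N; have := pair (2 * n + 1)%N; lia. }
have e0 : (e 0%N <= 1)%N by have := eE 0%N; lia.
have t0 : t 0 = 0%N by [].
have [E0|E0] : e 0%N = 0%N \/ e 0%N = 1%N by lia.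
- have et : forall n, e n = t n by apply: trec_uniq => //; exact: trec_t.
  split.
  + right; split.
    * apply: enum_evil => // n; rewrite -et; have := eE n; lia.
    * apply: enum_odious => // n; rewrite -et; have := eE n; lia.
  + right => n; have := eE n; rewrite et; have := t_le1 n; lia.
- have et : forall n, e n = (1 - t n)%N by apply: trec_uniq => //; exact: trec_tc.
  split.
  + left; split.
    * apply: enum_odious => // n; rewrite -et; have := eE n; lia.
    * apply: enum_evil => // n; have := eE n; rewrite et; have := t_le1 n; lia.
  + left => n; have := eE n; rewrite et; have := t_le1 n; lia.
Qed.
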